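(* Let $\mathcal{T}_1,\mathcal{T}_2,\mathcal{T}_3$ be channelled transition systems and let $\|$ be the parallel composition defined below. Then (i) $\mathcal{T}_1\|\mathcal{T}_2=\mathcal{T}_2\|\mathcal{T}_1$, and (ii) $(\mathcal{T}_1\|\mathcal{T}_2)\|\mathcal{T}_3=\mathcal{T}_1\|(\mathcal{T}_2\|\mathcal{T}_3)$, where these equalities are understood up to the canonical identification of composite states (and state labels) $(s_1,s_2)$ with $(s_2,s_1)$, respectively $((s_1,s_2),s_3)$ with $(s_1,(s_2,s_3))$.
   Context: A channelled transition system (CTS) is a tuple $\mathcal{T}=\langle C,\Sigma,\Upsilon,S,S_0,R,L,\mathsf{ls}\rangle$ where $C$ is a set of channels containing a distinguished broadcast channel $\star$, $\Sigma$ is a state alphabet, $\Upsilon=\Upsilon^+\times\{!,?\}\times C$ for some set $\Upsilon^+$ (a label $(\upsilon,!,c)$ is a send and $(\upsilon,?,c)$ a receive of $\upsilon$ on channel $c$), $S$ is a set of states, $S_0\subseteq S$ the initial states, $R\subseteq S\times\Upsilon\times S$ the transition relation, $L:S\to\Sigma$ a labelling, and $\mathsf{ls}:S\to 2^C$ a listening function with $\star\in\mathsf{ls}(s)$ for all $s$. The composition of $\mathcal{T}_i=\langle C_i,\Sigma_i,\Upsilon_i,S_i,S_0^i,R_i,L_i,\mathsf{ls}^i\rangle$ ($i=1,2$) is $\mathcal{T}_1\|\mathcal{T}_2=\langle C_1\cup C_2,\Sigma_1\times\Sigma_2,\Upsilon_1\cup\Upsilon_2,S_1\times S_2,S_0^1\times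 S_0^2,R,L,\mathsf{ls}\rangle$ with $L(s_1,s_2)=(L_1(s_1),L_2(s_2))$, $\mathsf{ls}(s_1,s_2)=\mathsf{ls}^1(s_1)\cup\mathsf{ls}^2(s_2)$, and $R$ the union of the following three sets: (1) triples $((s_1,s_2),(\upsilon,!,c),(s_1',s_2'))$ such that one of: $(s_1,(\upsilon,!,c),s_1')\in R_1$ and $(s_2,(\upsilon,?,c),s_2')\in R_2$; or $(s_1,(\upsilon,?,c),s_1')\in R_1$ and $(s_2,(\upsilon,!,c),s_2')\in R_2$; or $(s_1,(\upsilon,!,c),s_1')\in R_1$, $c\notin\mathsf{ls}^2(s_2)$ and $s_2=s_2'$; or $c\notin\mathsf{ls}^1(s_1)$, $s_1=s_1'$ and $(s_2,(\upsilon,!,c),s_2')\in R_2$; (2) triples $((s_1,s_2),(\upsilon,?,c),(s_1',s_2'))$ such that one of: $(s_1,(\upsilon,?,c),s_1')\in R_1$ and $(s_2,(\upsilon,?,c),s_2')\in R_2$; or $(s_1,(\upsilon,?,c),s_1')\in R_1$, $c\notin\mathsf{ls}^2(s_2)$ and $s_2=s_2'$; or $c\notin\mathsf{ls}^1(s_1)$, $s_1=s_1'$ and $(s_2,(\upsilon,?,c),s_2')\in R_2$; (3) triples $((s_1,s_2),(\upsilon,\gamma,\star),(s_1',s_2'))$ with $\gamma\in\{!,?\}$ such that either $(s_1,(\upsilon,\gamma,\star),s_1')\in R_1$, $s_2=s_2'$ and there is no $s_2''$ with $(s_2,(\upsilon,?,\star),s_2'')\in R_2$; or $s_1=s_1'$,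 there is no $s_1''$ with $(s_1,(\upsilon,?,\star),s_1'')\in R_1$, and $(s_2,(\upsilon,\gamma,\star),s_2')\in R_2$. *)

(* Defs.v *)
Set Implicit Arguments.

Inductive dir : Type := Snd | Rcv.

Section CTSDefs.
(* Ch : universe of channels (containing the broadcast channel [star]),
   U  : universe of message contents (Upsilon^+ is a subset of it). *)
Variables (Ch U : Type) (star : Ch).

Definition label : Type := (U * dir * Ch)%type.

Record CTS : Type := mkCTS {
  chans : Ch -> Prop;
  Sig   : Type;
  ups   : label -> Prop;
  St    : Type;
  init  : St -> Prop;
  trans : St -> label -> St -> Prop;
  lab   : St -> Sig;
  ls    : St -> Ch -> Prop
}.

Definition wf_CTS (T : CTS) : Prop :=
  chans T star /\
  (exists Uplus : U -> Prop,
      forall v d c, ups T (v, d, c) <-> (Uplus v /\ chans T c)) /\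
  (forall s l s', trans T s l s' -> ups T l) /\
  (forall s c, ls T s c -> chans T c) /\
  (forall s, ls T s star).

Definition comp_trans (T1 T2 : CTS)
  (p : St T1 * St T2) (l : label) (p' : St T1 * St T2) : Prop :=
  let (s1, s2) := p in let (s1', s2') := p' in
  match l with (v, g, c) =>
  (g = Snd /\
    ( (trans T1 s1 (v, Snd, c) s1' /\ trans T2 s2 (v, Rcv, c) s2')
   \/ (trans T1 s1 (v, Rcv, c) s1' /\ trans T2 s2 (v, Snd, c) s2')
   \/ (trans T1 s1 (v, Snd, c) s1' /\ ~ ls T2 s2 c /\ s2 = s2')
   \/ (~ ls T1 s1 c /\ s1 = s1' /\ trans T2 s2 (v, Snd, c) s2')))
  \/
  (g = Rcv /\
    ( (trans T1 s1 (v, Rcv, c) s1' /\ trans T2 s2 (v, Rcv, c) s2')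
   \/ (trans T1 s1 (v, Rcv, c) s1' /\ ~ ls T2 s2 c /\ s2 = s2')
   \/ (~ ls T1 s1 c /\ s1 = s1' /\ trans T2 s2 (v, Rcv, c) s2')))
  \/
  (c = star /\
    ( (trans T1 s1 (v, g, star) s1' /\ s2 = s2' /\
         ~ (exists s2'', trans T2 s2 (v, Rcv, star) s2''))
   \/ (s1 = s1' /\ ~ (exists s1'', trans T1 s1 (v, Rcv, star) s1'') /\
         trans T2 s2 (v, g, star) s2')))
  end.

Definition comp (T1 T2 : CTS) : CTS := {|
  chans := fun c => chans T1 c \/ chans T2 c;
  Sig   := (Sig T1 * Sig T2)%type;
  ups   := fun l => ups T1 l \/ ups T2 l;
  St    := (St T1 * St T2)%type;
  init  := fun p => init T1 (fst p) /\ init T2 (snd p);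
  trans := comp_trans T1 T2;
  lab   := fun p => (lab T1 (fst p), lab T2 (snd p));
  ls    := fun p c => ls T1 (fst p) c \/ ls T2 (snd p) c
|}.

Definition equal_upto (T T' : CTS) (f : St T -> St T') (g : Sig T -> Sig T')
  : Prop :=
  (exists f' : St T' -> St T,
     (forall s, f' (f s) = s) /\ (forall s', f (f' s') = s')) /\
  (exists g' : Sig T' -> Sig T,
     (forall x, g' (g x) = x) /\ (forall x', g (g' x') = x')) /\
  (forall c, chans T c <-> chans T' c) /\
  (forall l, ups T l <-> ups T' l) /\
  (forall s, init T s <-> init T' (f s)) /\
  (forall s l s', trans T s l s' <-> trans T' (f s) l (f s')) /\
  (forall s, lab T' (f s) = g (lab T s)) /\
  (forall s c, ls T s c <-> ls T' (f s) c).

End CTSDefs.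

Definition swap {A B : Type} (p : A * B) : B * A := (snd p, fst p).
Definition assoc {A B C : Type} (p : (A * B) * C) : A * (B * C) :=
  (fst (fst p), (snd (fst p), snd p)).

(* Main.v *)
Require Import Defs.
From Stdlib Require Import Setoid Classical.

Section Aux.
Variables (Ch U : Type) (star : Ch).

Definition Rx (T : CTS Ch U) (v : U) (c : Ch) (s s' : St T) : Prop :=
  trans T s (v, Rcv, c) s' \/ (~ ls T s c /\ s = s') \/
  (c = star /\ s = s' /\ ~ (exists t, trans T s (v, Rcv, c) t)).

Lemma CT (T1 T2 : CTS Ch U) (H1 : forall s, ls T1 s star)
  (H2 : forall s, ls T2 s star) s1 s2 s1' s2' v g c :
  trans (comp star T1 T2) (s1, s2) (v, g, c) (s1', s2') <->
  (g = Snd /\ (trans T1 s1 (v, Snd, c) s1' /\ Rx T2 v c s2 s2' \/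
               Rx T1 v c s1 s1' /\ trans T2 s2 (v, Snd, c) s2')) \/
  (g = Rcv /\ Rx T1 v c s1 s1' /\ Rx T2 v c s2 s2' /\
     (trans T1 s1 (v, Rcv, c) s1' \/ trans T2 s2 (v, Rcv, c) s2')).
Proof.
  simpl. unfold Rx. split.
  - intros [[-> H]|[[-> H]|[-> H]]]; intuition (subst; eauto 6).
    all: destruct g; intuition eauto.
  - intros [[-> H]|[-> H]].
    + intuition (subst; eauto 8); exfalso; eauto.
    + intuition (subst; eauto 8); try (exfalso; eauto 2; fail).
      all: try (right; right; split; [reflexivity|]; eauto 8; fail).
      all: exfalso; eauto.
Qed.

Lemma RxE (T : CTS Ch U) v c s s' : Rx T v c s s' <->
  trans T s (v, Rcv, c) s' \/ (~ ls T s c /\ s = s') \/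
  (c = star /\ s = s' /\ ~ (exists t, trans T s (v, Rcv, c) t)).
Proof. reflexivity. Qed.

Lemma RxC (T1 T2 : CTS Ch U) (H1 : forall s, ls T1 s star)
  (H2 : forall s, ls T2 s star) s1 s2 s1' s2' v c :
  Rx (comp star T1 T2) v c (s1, s2) (s1', s2') <->
  Rx T1 v c s1 s1' /\ Rx T2 v c s2 s2'.
Proof.
  rewrite (RxE (comp star T1 T2)). rewrite CT by assumption. simpl. split.
  - intros [H|[H|H]].
    + destruct H as [[? _]|[_ [? [? _]]]]; [discriminate|]; tauto.
    + destruct H as [Hl Heq]; injection Heq as <- <-. unfold Rx; tauto.
    + destruct H as [-> [Heq Hn]]; injection Heq as <- <-.
      unfold Rx; split; right; right; (split; [reflexivity|split; [reflexivity|]]);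
        intros [t Ht].
      * apply Hn. destruct (classic (exists t2, trans T2 s2 (v, Rcv, star) t2))
          as [[t2 Ht2]|Hno].
        -- exists (t, t2). apply (CT _ _ H1 H2). right. unfold Rx. intuition.
        -- exists (t, s2). apply (CT _ _ H1 H2). right. unfold Rx. intuition.
      * apply Hn. destruct (classic (exists t1, trans T1 s1 (v, Rcv, star) t1))
          as [[t1 Ht1]|Hno].
        -- exists (t1, t). apply (CT _ _ H1 H2). right. unfold Rx. intuition.
        -- exists (s1, t). apply (CT _ _ H1 H2). right. unfold Rx. intuition.
  - intros [HA HB].
    destruct (classic (trans T1 s1 (v, Rcv, c) s1' \/ trans T2 s2 (v, Rcv, c) s2'))
      as [Hr|Hnr].
    + left. right. tauto.
    + right. unfold Rx in HA, HB.
      destruct HA as [HA|[[HA E1]|[Ec [E1 HA]]]]; [tauto| |];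
      destruct HB as [HB|[[HB E2]|[Ec' [E2 HB]]]]; try tauto; subst.
      * left. split; [intros [?|?]; eauto|reflexivity].
      * exfalso; eauto.
      * exfalso; eauto.
      * right. split; [reflexivity|split; [reflexivity|]].
        intros [[t1 t2] Ht]. apply (CT _ _ H1 H2) in Ht.
        destruct Ht as [[? _]|[_ [_ [_ [?|?]]]]]; [discriminate| |]; eauto.
Qed.

End Aux.

Theorem mainTheorem1 (Ch U : Type) (star : Ch) (T1 T2 T3 : CTS Ch U) :
  wf_CTS star T1 -> wf_CTS star T2 -> wf_CTS star T3 ->
  equal_upto (comp star T1 T2) (comp star T2 T1) swap swap /\
  equal_upto (comp star (comp star T1 T2) T3) (comp star T1 (comp star T2 T3))
    assoc assoc.
Proof.
  intros (_&_&_&_&H1) (_&_&_&_&H2) (_&_&_&_&H3).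
  assert (H12 : forall s, ls (comp star T1 T2) s star) by (intros; simpl; auto).
  assert (H23 : forall s, ls (comp star T2 T3) s star) by (intros; simpl; auto).
  split.
  - split; [exists swap; split; intros [a b]; reflexivity|].
    split; [exists swap; split; intros [a b]; reflexivity|].
    split; [intros; simpl; tauto|].
    split; [intros; simpl; tauto|].
    split; [intros [a b]; simpl; tauto|].
    split.
    + intros [a b] [[v g] c] [a' b']. unfold swap; cbn [fst snd].
      rewrite !CT by assumption. tauto.
    + split; [intros [a b]; reflexivity|].
      intros [a b] c; simpl; tauto.
  - split; [exists (fun p => ((fst p, fst (snd p)), snd (snd p))); split;
            [intros [[a b] d]|intros [a [b d]]]; reflexivity|].
    split; [exists (fun p => ((fst p, fst (snd p)), snd (snd p))); split;
            [intros [[a b] d]|intros [a [b d]]]; reflexivity|].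
    split; [intros; simpl; tauto|].
    split; [intros; simpl; tauto|].
    split; [intros [[a b] d]; simpl; tauto|].
    split.
    + intros [[a b] d] [[v g] c] [[a' b'] d']. unfold assoc; cbn [fst snd].
      rewrite (CT _ _ star _ _ H12 H3), (CT _ _ star _ _ H1 H23), !(RxC _ _ star _ _ H1 H2), !(RxC _ _ star _ _ H2 H3), !(CT _ _ star _ _ H1 H2), !(CT _ _ star _ _ H2 H3).
      destruct g; split; intros; intuition discriminate.
    + split; [intros [[a b] d]; reflexivity|].
      intros [[a b] d] c; simpl; tauto.
Qed.
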